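(* Let $x\ge 2$ be real and let $2\le\lambda<3$. For a positive integer $n$ let $p_n$ denote the least prime factor of $n$, and for each prime $p\mid n$ define \[ w_p(n)=\begin{cases} 1-\dfrac{\log p}{\log x} & \text{if } p=p_n,\\[2mm] \dfrac{\log p_n}{\log x} & \text{if } p>p_n \text{ and } p<x^{1/2},\\[2mm] 1-\dfrac{\log p}{\log x} & \text{if } p>p_n \text{ and } p\ge x^{1/2},\end{cases} \] and \[ w(n)=1-\frac{1}{3-\lambda}\sum_{\substack{p\mid n\\ p<x}} w_p(n). \] If $n\le x^\lambda$ and $w(n)>0$, then $n$ has at most $2$ distinct prime factors.
   Context: All sums over $p$ run over primes. *)

(* Defs.v *)
From Stdlib Require Import Reals.
From mathcomp Require Import all_boot.

(* Least prime factor p_n of n (mathcomp's pdiv; for n > 1 this is the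
   smallest prime divisor). *)
Definition lpf (n : nat) : nat := pdiv n.

Definition wp (x : R) (n p : nat) : R :=
  if p == lpf n then Rminus 1 (Rdiv (ln (INR p)) (ln x))
  else if Rlt_dec (INR p) (sqrt x) then Rdiv (ln (INR (lpf n))) (ln x)
  else Rminus 1 (Rdiv (ln (INR p)) (ln x)).

Definition sum_wp (x : R) (n : nat) : R :=
  List.fold_right Rplus R0
    (List.map (wp x n)
       (filter (fun p => if Rlt_dec (INR p) x then true else false) (primes n))).

Definition w (x lam : R) (n : nat) : R :=
  Rminus 1 (Rmult (Rinv (Rminus 3 lam)) (sum_wp x n)).

(* Main.v *)
Require Import Defs.
From Stdlib Require Import Reals Lra.
From mathcomp Require Import all_boot.
Local Open Scope R_scope.

Definition rsum (f : nat -> R) (s : seq nat) : R :=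
  List.fold_right Rplus R0 (List.map f s).

Lemma rsum_nil f : rsum f [::] = 0.
Proof. by []. Qed.
Lemma rsum_cons f a s : rsum f (a :: s) = (f a + rsum f s).
Proof. by []. Qed.

Lemma rsum_le f g s : (forall p, p \in s -> (f p <= g p)) -> (rsum f s <= rsum g s).
Proof.
elim: s => [|a s IH] H; rewrite ?rsum_nil ?rsum_cons; first lra.
have h1 := H a (mem_head _ _).
have h2 : (rsum f s <= rsum g s) by apply: IH => p hp; apply: H; rewrite inE hp orbT.
lra.
Qed.

Lemma rsum_nonneg f s : (forall p, p \in s -> (0 <= f p)) -> (0 <= rsum f s).
Proof.
move=> H; have := rsum_le (fun _ => 0) f s H.
suff -> : rsum (fun _ => 0) s = 0 by [].
by elim: s {H} => [|a s IH] //; rewrite rsum_cons IH; lra.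
Qed.

Lemma rsum_const c s : rsum (fun _ => c) s = (INR (size s) * c).
Proof.
elim: s => [|a s IH]; rewrite ?rsum_nil ?rsum_cons /=; first lra.
rewrite IH; case: (size s) => [|k] /=; lra.
Qed.

Lemma rsum_add f g s : rsum (fun p => f p + g p) s = (rsum f s + rsum g s).
Proof. elim: s => [|a s IH]; rewrite ?rsum_nil ?rsum_cons; [lra| rewrite IH; lra]. Qed.

Lemma rsum_filter f (P : pred nat) s :
  rsum f s = (rsum f (filter P s) + rsum f (filter (predC P) s)).
Proof.
elim: s => [|a s IH] /=; first (rewrite !rsum_nil; lra).
rewrite rsum_cons IH; case: (P a) => /=; rewrite ?rsum_cons; lra.
Qed.

Lemma rsum_one f s a : (forall p, p \in s -> (0 <= f p)) -> a \in s -> (f a <= rsum f s).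
Proof.
elim: s => [|b s IH] H //; rewrite inE rsum_cons.
have H' : forall p, p \in s -> (0 <= f p) by move=> p hp; apply: H; rewrite inE hp orbT.
move=> /orP [/eqP ->|ha].
  have := rsum_nonneg f s H'; lra.
have := H b (mem_head _ _); have := IH H' ha; lra.
Qed.

Lemma rsum_two f s a b : (forall p, p \in s -> (0 <= f p)) -> uniq s ->
  a \in s -> b \in s -> a != b -> (f a + f b <= rsum f s).
Proof.
elim: s => [|c s IH] H //= /andP [cn us]; rewrite !inE rsum_cons.
have H' : forall p, p \in s -> (0 <= f p) by move=> p hp; apply: H; rewrite inE hp orbT.
move=> /orP [/eqP ea|ha] /orP [/eqP eb|hb] ab.
- by rewrite ea eb eqxx in ab.
- subst; have := rsum_one f s b H' hb; lra.
- subst; have := rsum_one f s a H' ha; lra.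
- have := IH H' us ha hb ab; have := H c (mem_head _ _); lra.
Qed.

Lemma ndvd_prod a s : prime a -> all prime s -> a \notin s -> ~~ (a %| foldr muln 1%N s).
Proof.
move=> pa; elim: s => [|b s IH] /=.
  by move=> _ _; rewrite dvdn1; case: eqP pa => // ->.
move=> /andP [pb ps]; rewrite inE negb_or => /andP [ab ns].
by rewrite Euclid_dvdM // dvdn_prime2 // (negbTE ab) /= IH.
Qed.

Lemma prod_dvd s n : uniq s -> all prime s -> all (fun p => p %| n) s ->
  foldr muln 1%N s %| n.
Proof.
elim: s => [|a s IH] //= /andP [an us] /andP [pa ps] /andP [dan ds].
rewrite Gauss_dvd ?dan ?IH //.
by rewrite prime_coprime // ndvd_prod.
Qed.

Lemma rsum_ext f g s : (forall p, f p = g p) -> rsum f s = rsum g s.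
Proof. move=> H; elim: s => [|a s IH] //; rewrite !rsum_cons IH H //. Qed.

Lemma rsum_div f c s : rsum (fun p => f p / c) s = rsum f s / c.
Proof.
elim: s => [|a s IH]; rewrite ?rsum_nil ?rsum_cons; first (unfold Rdiv; ring).
rewrite IH; unfold Rdiv; ring.
Qed.

Lemma rsum_ln s : all (fun p => (0 < p)%N) s ->
  rsum (fun p => ln (INR p)) s = ln (INR (foldr muln 1%N s)).
Proof.
elim: s => [|a s IH] /=; first by rewrite rsum_nil ln_1.
move=> /andP [ha hs]; rewrite rsum_cons IH //.
change (a * foldr muln 1%N s)%N with (Nat.mul a (foldr muln 1%N s)).
have hp : (0 < foldr muln 1%N s)%N.
  by elim: s {IH} hs => [|b s IHs] //= /andP [hb hs]; rewrite muln_gt0 hb IHs.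
rewrite mult_INR ln_mult //; apply: lt_0_INR; apply/ltP => //.
Qed.

Lemma ln_le' a b : 0 < a -> a <= b -> ln a <= ln b.
Proof.
move=> ha hab; case: (Rle_lt_or_eq_dec _ _ hab) => h.
  by apply: Rlt_le; apply: ln_increasing.
by rewrite h; apply: Rle_refl.
Qed.

Lemma frac_bounds x p : 1 < x -> (0 < p)%N -> INR p < x ->
  0 <= ln (INR p) / ln x < 1.
Proof.
move=> hx hp hpx.
have hL : 0 < ln x by rewrite -ln_1; apply: ln_increasing; lra.
have h1 : 1 <= INR p by apply: (le_INR 1); apply/leP.
have h0 : 0 <= ln (INR p) by rewrite -ln_1; apply: ln_le'; lra.
have h2 : ln (INR p) < ln x by apply: ln_increasing; lra.
split.
  unfold Rdiv; apply: Rmult_le_pos => //; apply: Rlt_le; apply: Rinv_0_lt_compat => //.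
apply: (Rmult_lt_reg_r (ln x)) => //; unfold Rdiv.
rewrite Rmult_assoc Rinv_l; lra.
Qed.

Lemma frac_ge1 x y : 0 < ln x -> ln x <= y -> 1 <= y / ln x.
Proof.
move=> hL hy; apply: (Rmult_le_reg_r (ln x)) => //; unfold Rdiv.
rewrite Rmult_assoc Rinv_l; lra.
Qed.

Theorem lemma1 (x lam : R) (n : nat) :
  Rle 2 x -> Rle 2 lam -> Rlt lam 3 -> (0 < n)%N ->
  Rle (INR n) (Rpower x lam) -> Rlt 0 (w x lam n) ->
  (size (primes n) <= 2)%N.
Proof.
move=> hx hl1 hl2 n0 hn hw.
rewrite leqNgt; apply/negP => h3.
have n1 : (1 < n)%N by move: h3 n0; case: n {hn hw} => [|[|n]].
set P := primes n in h3.
set L := ln x.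
have hL : 0 < L by rewrite /L -ln_1; apply: ln_increasing; lra.
set q := lpf n.
have hqP : q \in P by rewrite mem_primes pdiv_prime // pdiv_dvd n0.
have hqmin : forall p, p \in P -> (q <= p)%N.
  by move=> p; rewrite mem_primes => /and3P [pp _ dp]; apply: pdiv_min_dvd => //; apply: prime_gt1.
have hPpos : forall p, p \in P -> (0 < p)%N.
  by move=> p; rewrite mem_primes => /and3P [pp _ _]; apply: prime_gt0.
set a := fun p => ln (INR p) / L.
have hsumP : rsum a P <= lam.
  rewrite /a rsum_div rsum_ln; last by apply/allP.
  set m := foldr muln 1%N P.
  have hdv : (m %| n)%N.
    apply: prod_dvd; first exact: primes_uniq.
      by apply/allP => p; rewrite mem_primes => /and3P [].
    by apply/allP => p; rewrite mem_primes => /and3P [].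
  have hm0 : (0 < m)%N by case: m hdv => [|m'] //; rewrite dvd0n => /eqP h; rewrite h in n0.
  have hmn : INR m <= INR n by apply: le_INR; apply/leP; apply: dvdn_leq.
  have hm : 0 < INR m by apply: lt_0_INR; apply/ltP.
  have : ln (INR m) <= lam * L.
    rewrite /L -ln_Rpower; apply: ln_le' => //; lra.
  move=> h; apply: (Rmult_le_reg_r L) => //; unfold Rdiv.
  rewrite Rmult_assoc Rinv_l; lra.
set ltx := (fun p : nat => if Rlt_dec (INR p) x then true else false).
set l := filter ltx P.
have hS : sum_wp x n = rsum (wp x n) l by [].
have hl : forall p, p \in l -> INR p < x /\ p \in P.
  move=> p; rewrite mem_filter => /andP [hp ->]; split => //.
  by move: hp; rewrite /ltx; case: Rlt_dec.
have hwq : wp x n q = 1 - a q by rewrite /wp eqxx.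
have hqpos := hPpos q hqP.
have ha : forall p, p \in l -> 0 <= a p < 1.
  move=> p /hl [h1 h2]; apply: frac_bounds => //; [lra | exact: hPpos].
have haq : 0 <= a q.
  rewrite /a; unfold Rdiv; apply: Rmult_le_pos; last by apply: Rlt_le; apply: Rinv_0_lt_compat.
  rewrite -ln_1; apply: ln_le'; first lra; by apply: (le_INR 1); apply/leP.
have hnn : forall p, p \in l -> 0 <= wp x n p.
  move=> p hp; have := ha p hp; rewrite /a /L /wp; case: eqP => _; first lra.
  case: Rlt_dec => ? /= h; [exact: haq | lra].
suff key : 3 - lam <= sum_wp x n.
  move: hw; rewrite /w.
  have h0 : 0 < 3 - lam by lra.
  have : / (3 - lam) * (3 - lam) <= / (3 - lam) * sum_wp x n.
    apply: Rmult_le_compat_l => //; apply: Rlt_le; apply: Rinv_0_lt_compat => //.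
  rewrite Rinv_l; lra.
rewrite hS.
case: (boolP (has (fun p => (p != q) && (if Rlt_dec (INR p) (sqrt x) then true else false)) l)).
  move=> /hasP [p hpl /andP [pq hps]].
  have [hpx hpP] := hl p hpl.
  have hps' : INR p < sqrt x by move: hps; case: Rlt_dec.
  have hwp : wp x n p = a q.
    by rewrite /wp (negbTE pq); case: Rlt_dec.
  have hql : q \in l.
    rewrite mem_filter hqP andbT /ltx; case: Rlt_dec => // hn'; exfalso; apply: hn'.
    have : INR q <= INR p by apply: le_INR; apply/leP; apply: hqmin.
    have := sqrt_less x ltac:(lra) ltac:(lra); lra.
  have := rsum_two (wp x n) l q p hnn (filter_uniq _ (primes_uniq n)) hql hpl.
  rewrite eq_sym pq hwq hwp => /(_ isT); lra.
move=> /hasPn hno.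
have hwl : forall p, p \in l -> wp x n p = 1 - a p.
  move=> p hp; have := hno p hp; rewrite /wp; case: eqP => // /eqP pq.
  by case: Rlt_dec.
have e1 : rsum (wp x n) l = INR (size l) - rsum a l.
  have := rsum_add (wp x n) a l.
  have -> : rsum (fun p => wp x n p + a p) l = rsum (fun _ => 1) l.
    elim: (l) hwl => [|b s IH] hw' //; rewrite !rsum_cons IH.
      by rewrite hw' ?mem_head //; ring.
    by move=> p hp; apply: hw'; rewrite inE hp orbT.
  rewrite rsum_const; lra.
set lc := filter (predC ltx) P.
have hlc : INR (size lc) <= rsum a lc.
  rewrite -[_ <= _]/(_ <= _) -(Rmult_1_r (INR _)) -rsum_const; apply: rsum_le => p.
  rewrite mem_filter => /andP [hp _]; apply: frac_ge1 => //.
  move: hp; rewrite /= /ltx; case: Rlt_dec => // hnx _.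
  apply: ln_le'; lra.
have hsplit := rsum_filter a ltx P.
have hsz : (size l + size lc)%N = size P by rewrite !size_filter count_predC.
have hsz' : INR (size l) + INR (size lc) = INR (size P).
  by rewrite -hsz -plus_INR.
have h3' : 3 <= INR (size P).
  by have := le_INR 3 (size P) ltac:(apply/leP; exact: h3); rewrite /=; lra.
rewrite e1; fold l lc in hsplit; lra.
Qed.
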